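(* Let $(S,M)$ be a Coxeter matrix and let $e=\{s_+,s_-\}\subseteq S$ with $m_{s_+,s_-}=3$. Let $(S/e,N)$ be the edge contraction of $(S,M)$ along $e$. Then the assignment \[ s\mapsto s \quad (s\in S\setminus\{s_+,s_-\}),\qquad s_0\mapsto s_+s_-s_+ \] extends to a well-defined group homomorphism $\phi: W_{S/e,N}\to W_{S,M}$, and $\phi$ is injective.
   Context: A Coxeter matrix on a nonempty set $S$ is a symmetric matrix $M=(m_{s,s'})_{s,s'\in S}$ with entries in $\mathbb Z_{\ge 1}\sqcup\{\infty\}$ such that $m_{s,s'}=1$ iff $s=s'$. The Coxeter group $W_{S,M}$ is the group generated by the elements of $S$ subject to the relations $(ss')^{m_{s,s'}}=1$ for all $s,s'$ with $m_{s,s'}\neq\infty$. Edge contraction: let $e=\{s_+,s_-\}\subseteq S$ with $s_+\ne s_-$ and $m_{s_+,s_-}=3$. Let $s_0$ be a new symbol and $S/e=(S\setminus\{s_+,s_-\})\sqcup\{s_0\}$. Define the symmetric matrix $N=(n_{s,s'})_{s,s'\in S/e}$ by $n_{s,s}=1$ for all $s$; $n_{s,s'}=m_{s,s'}$ for distinct $s,s'\in S\setminus\{s_+,s_-\}$; and for $s\in S\setminus\{s_+,s_-\}$: $n_{s,s_0}=n_{s_0,s}=m_{s,s_+}+m_{s,s_-}-2$ if $m_{s,s_+}=2$ or $m_{s,s_-}=2$ (with the convention $\infty+k=\infty$), and $n_{s,s_0}=n_{s_0,s}=\infty$ if both $m_{s,s_+}>2$ and $m_{s,s_-}>2$. Then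 $N$ is a Coxeter matrix, and $(S/e,N)$ is called the edge contraction of $(S,M)$ along $e$. *)

(* Defs.v *)
From mathcomp Require Import all_boot.
Set Implicit Arguments. Unset Strict Implicit. Unset Printing Implicit Defensive.

(* Entries of a Coxeter matrix: Some m = m (a positive integer), None = infinity. *)
Definition coxeter_matrix (S : eqType) (M : S -> S -> option nat) : Prop :=
  (forall s s', M s s' = M s' s) /\
  (forall s s', M s s' <> Some 0) /\
  (forall s s', M s s' = Some 1 <-> s = s').

(* Group presentations: words over letters (x, true) = x and (x, false) = x^-1. *)
Definition letter (X : Type) := (X * bool)%type.
Definition inv_letter (X : Type) (x : letter X) : letter X := (x.1, ~~ x.2).

(* Two words are equal in the presented group iff
   they are related by pres_eq. *)
Inductive pres_eq (X : Type) (R : seq (letter X) -> Prop) :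
    seq (letter X) -> seq (letter X) -> Prop :=
| pe_refl w : pres_eq R w w
| pe_sym w w' : pres_eq R w w' -> pres_eq R w' w
| pe_trans w1 w2 w3 : pres_eq R w1 w2 -> pres_eq R w2 w3 -> pres_eq R w1 w3
| pe_free u v x : pres_eq R (u ++ x :: inv_letter x :: v) (u ++ v)
| pe_rel u v r : R r -> pres_eq R (u ++ r ++ v) (u ++ v).

Definition coxeter_rel (S : Type) (M : S -> S -> option nat) (r : seq (letter S)) : Prop :=
  exists s s' m, M s s' = Some m /\ r = flatten (nseq m [:: (s, true); (s', true)]).

Definition cox_eq (S : Type) (M : S -> S -> option nat) :=
  pres_eq (coxeter_rel M).

(* Edge contraction along e = {sp, sm}: S/e = option (S \ {sp, sm}), None = s0. *)
Definition contr_set (S : eqType) (sp sm : S) :=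
  {s : S | (s != sp) && (s != sm)}.
Definition contr_type (S : eqType) (sp sm : S) := option (contr_set sp sm).

Definition contr_entry (a b : option nat) : option nat :=
  if (a == Some 2) || (b == Some 2) then
    match a, b with Some x, Some y => Some (x + y - 2) | _, _ => None end
  else None.

Definition contr_matrix (S : eqType) (M : S -> S -> option nat) (sp sm : S)
    (x y : contr_type sp sm) : option nat :=
  match x, y with
  | Some a, Some b => M (val a) (val b)
  | None, None => Some 1
  | Some a, None => contr_entry (M (val a) sp) (M (val a) sm)
  | None, Some b => contr_entry (M (val b) sp) (M (val b) sm)
  end.

Definition contr_phi_letter (S : eqType) (sp sm : S) (x : letter (contr_type sp sm))
    : seq (letter S) :=
  match x.1 with
  | Some a => [:: (val a, x.2)]
  | None => [:: (sp, x.2); (sm, x.2); (sp, x.2)]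
  end.

Definition contr_phi (S : eqType) (sp sm : S) (w : seq (letter (contr_type sp sm)))
    : seq (letter S) :=
  flatten (map (@contr_phi_letter S sp sm) w).
Arguments contr_phi {S} sp sm w.
Arguments contr_matrix {S} M sp sm x y.

(* Main.v *)
From Stdlib Require Import Reals Lra ClassicalEpsilon FunctionalExtensionality.
Require Import Defs.
From mathcomp Require Import all_boot zify.
Set Implicit Arguments. Unset Strict Implicit. Unset Printing Implicit Defensive.
Delimit Scope R_scope with Re.

Section Pres.
Variable X : Type.
Variable Rl : seq (letter X) -> Prop.

Lemma pe_ctx a b w w' : pres_eq Rl w w' -> pres_eq Rl (a ++ w ++ b) (a ++ w' ++ b).
Proof.
elim=> {w w'}.
- by move=> w; apply: pe_refl.
- by move=> w w' _ IH; apply: pe_sym.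
- by move=> w1 w2 w3 _ IH1 _ IH2; apply: pe_trans IH2.
- move=> u v x.
  have -> : a ++ (u ++ x :: inv_letter x :: v) ++ b = (a ++ u) ++ x :: inv_letter x :: (v ++ b)
    by rewrite -!catA.
  have -> : a ++ (u ++ v) ++ b = (a ++ u) ++ (v ++ b) by rewrite -!catA.
  exact: pe_free.
- move=> u v r Hr.
  have -> : a ++ (u ++ r ++ v) ++ b = (a ++ u) ++ r ++ (v ++ b) by rewrite -!catA.
  have -> : a ++ (u ++ v) ++ b = (a ++ u) ++ (v ++ b) by rewrite -!catA.
  exact: pe_rel.
Qed.

Lemma pe_cat w1 w1' w2 w2' : pres_eq Rl w1 w1' -> pres_eq Rl w2 w2' ->
  pres_eq Rl (w1 ++ w2) (w1' ++ w2').
Proof.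
move=> h1 h2; apply: pe_trans (_ : pres_eq Rl (w1' ++ w2) _).
- by have := pe_ctx [::] w2 h1; rewrite /=.
- by have := pe_ctx w1' [::] h2; rewrite !cats0.
Qed.
End Pres.

Lemma size_flatten_nseq (A : Type) (a b : A) n : size (flatten (nseq n [:: a; b])) = n.*2.
Proof. by elim: n => //= n IH; rewrite IH doubleS. Qed.

Section Cox.
Variable T : Type.
Variable N : T -> T -> option nat.
Hypothesis Nrefl : forall x, N x x = Some 1.
Local Notation ceq := (cox_eq N).

Lemma ceq_rel u v s s' m : N s s' = Some m ->
  ceq (u ++ flatten (nseq m [:: (s, true); (s', true)]) ++ v) (u ++ v).
Proof. move=> h; apply: pe_rel; by exists s, s', m. Qed.

Lemma ceq_xxt x : ceq [:: (x, true); (x, true)] [::].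
Proof. exact: (@ceq_rel [::] [::] x x 1 (Nrefl x)). Qed.

Lemma ceq_pos1 x b : ceq [:: (x, b)] [:: (x, true)].
Proof.
case: b; first exact: pe_refl.
apply: pe_trans (_ : ceq [:: (x, false); (x, true); (x, true)] _).
- apply: pe_sym. exact: (@ceq_rel [:: (x, false)] [::] x x 1 (Nrefl x)).
- have := @pe_free _ (coxeter_rel N) [::] [:: (x, true)] (x, false). by [].
Qed.

Lemma ceq_pos w : ceq w (map (fun l => (l.1, true)) w).
Proof.
elim: w => [|[x b] w IH] /=; first exact: pe_refl.
by have := pe_cat (ceq_pos1 x b) IH.
Qed.

Lemma ceq_odd w w' : ceq w w' -> odd (size w) = odd (size w').
Proof.
elim=> {w w'} //.
- by move=> w1 w2 w3 _ -> _ ->.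
- by move=> u v x; rewrite !size_cat /= !addnS /= negbK.
- move=> u v r [s [s' [m [_ ->]]]].
  by rewrite !size_cat size_flatten_nseq !oddD odd_double.
Qed.
End Cox.


Definition pb (P : Prop) : bool := if excluded_middle_informative P then true else false.
Lemma pbP (P : Prop) : reflect P (pb P).
Proof. by rewrite /pb; case: excluded_middle_informative => h; constructor. Qed.

Fixpoint W (g a b : R) (j : nat) {struct j} : R :=
  match j with
  | 0 => a
  | 1 => b
  | S ((S k) as j') => (g * W g a b j' - W g a b k)%Re
  end.
Definition cheb g := W g 0%Re 1%Re.

Lemma WSS g a b j : W g a b j.+2 = (g * W g a b j.+1 - W g a b j)%Re.
Proof. by []. Qed.

Lemma W_shift g a b j : W g b (g * b - a)%Re j = W g a b j.+1.
Proof.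
have : W g b (g * b - a)%Re j = W g a b j.+1 /\ W g b (g * b - a)%Re j.+1 = W g a b j.+2.
  elim: j => [|j [IH1 IH2]]; first by [].
  split; first by [].
  by rewrite WSS IH1 IH2 [W g a b j.+3]WSS.
by case.
Qed.

Fixpoint altE (T : Type) (a b : T) (n : nat) : seq T :=
  match n with 0 => [::] | S k => rcons (altE b a k) b end.

Lemma size_altE T (a b : T) n : size (altE a b n) = n.
Proof. by elim: n a b => //= n IH a b; rewrite size_rcons IH. Qed.

Lemma altE_cat T n : forall (a b : T) k,
  altE a b (k + n) = altE (if odd n then b else a) (if odd n then a else b) k ++ altE a b n.
Proof.
elim: n => [|n IH] a b k; first by rewrite addn0 cats0.
by rewrite addnS /= IH rcons_cat; case: (odd n).
Qed.

Lemma altE_cons T (a b : T) n : altE a b n.+1 = (if odd n then a else b) :: altE a b n.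
Proof. by have := altE_cat n a b 1; rewrite add1n => ->; case: (odd n). Qed.

Lemma rev_altE T n : forall (a b : T), rev (altE a b n) = if odd n then altE a b n else altE b a n.
Proof.
elim: n => [|n IH] a b //.
rewrite {1}altE_cons rev_cons IH /=; by case: (odd n).
Qed.

Lemma altE_double T (a b : T) n : altE a b n.*2 = flatten (nseq n [:: a; b]).
Proof.
elim: n => [|n IH] //.
rewrite doubleS /= IH.
have -> : (a :: b :: flatten (nseq n [:: a; b])) = flatten (nseq n [:: a; b]) ++ [:: a; b].
  by elim: n {IH} => //= n ->.
by rewrite -!cats1 -catA.
Qed.

Lemma lift_altE_double T (a b : T) n :
  map (fun x => (x, true)) (altE a b n.*2) = flatten (nseq n [:: (a, true); (b, true)]).
Proof. by rewrite altE_double; elim: n => //= n ->. Qed.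

Lemma altE_char (T : eqType) (y : seq T) : forall (a b : T), a != b ->
  all (fun x => (x == a) || (x == b)) y ->
  (forall y1 y2 x, y <> y1 ++ x :: x :: y2) ->
  (forall y1 x, y = rcons y1 x -> x = b) -> y = altE a b (size y).
Proof.
elim/last_ind: y => [|y x IH] a b ab //= Hall Hnd Hlast.
have xb := Hlast y x erefl; subst x.
rewrite size_rcons /=; congr rcons.
move: Hall; rewrite all_rcons => /andP [_ Hall].
apply: IH.
- by rewrite eq_sym.
- by apply/allP => z /(allP Hall); rewrite orbC.
- move=> y1 y2 z Hy; apply: (Hnd y1 (rcons y2 b) z); by rewrite Hy rcons_cat.
- move=> y1 z Hy.
  have : (z == a) || (z == b).
    by move/allP: Hall; apply; rewrite Hy mem_rcons mem_head.
  case/orP=> /eqP // zb; subst z.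
  by exfalso; apply: (Hnd y1 [::] b); rewrite Hy -!cats1 -catA.
Qed.


Section Tits.
Variable T : eqType.
Variable N : T -> T -> option nat.
Hypothesis Nrefl : forall x, N x x = Some 1.
Hypothesis Nsym : forall x y, N x y = N y x.
Hypothesis Nnz : forall x y, N x y <> Some 0.

Definition liftw (u : seq T) : seq (letter T) := map (fun x => (x, true)) u.
Definition eqN u v := cox_eq N (liftw u) (liftw v).

Lemma eqN_refl u : eqN u u. Proof. exact: pe_refl. Qed.
Lemma eqN_sym u v : eqN u v -> eqN v u. Proof. exact: pe_sym. Qed.
Lemma eqN_trans u v w : eqN u v -> eqN v w -> eqN u w. Proof. exact: pe_trans. Qed.
Lemma eqN_cat u u' v v' : eqN u u' -> eqN v v' -> eqN (u ++ v) (u' ++ v').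
Proof. by rewrite /eqN /liftw !map_cat; apply: pe_cat. Qed.
Lemma eqN_xx x : eqN [:: x; x] [::].
Proof. exact: ceq_xxt. Qed.
Lemma eqN_cancel u v x : eqN (u ++ [:: x; x] ++ v) (u ++ v).
Proof. apply: eqN_cat (eqN_refl _) _. exact: (eqN_cat (eqN_xx x) (eqN_refl v)). Qed.
Lemma eqN_rcons2 u x : eqN (rcons (rcons u x) x) u.
Proof. rewrite -!cats1 -catA; have := eqN_cancel u [::] x; rewrite !cats0; by apply. Qed.
Lemma eqN_cancel_r u x : eqN (u ++ [:: x; x]) u.
Proof. have := eqN_rcons2 u x; rewrite -!cats1 -catA; by apply. Qed.
Lemma eqN_rev u : eqN (rev u ++ u) [::].
Proof.
elim: u => [|x u IH] /=; first exact: eqN_refl.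
rewrite rev_cons -cats1 -catA /=.
apply: eqN_trans (eqN_cancel _ _ _) IH.
Qed.
Lemma eqN_odd u v : eqN u v -> odd (size u) = odd (size v).
Proof. by move/ceq_odd; rewrite !size_map. Qed.

Lemma eqN_alt a b n : N a b = Some n -> eqN (altE a b n) (altE b a n).
Proof.
move=> h.
have rel : eqN (altE a b n.*2) [::].
  rewrite /eqN /liftw lift_altE_double /=.
  by have := (@ceq_rel _ N [::] [::] a b n h); rewrite /= cats0.
move: rel; rewrite -addnn altE_cat.
set X := altE _ _ n; set Y := altE a b n => rel.
have rX : rev X = altE b a n by rewrite /X rev_altE; case: (odd n).
rewrite -rX; apply: eqN_sym.
apply: eqN_trans (_ : eqN (rev X ++ (X ++ Y)) _).
- apply: eqN_sym; have := eqN_cat (eqN_refl (rev X)) rel; rewrite cats0; by apply.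
- rewrite catA; exact: (eqN_cat (eqN_rev X) (eqN_refl Y)).
Qed.

Definition lenP u n := pb (exists v, size v = n /\ eqN u v).
Lemma lenP_ex u : exists n, lenP u n.
Proof. exists (size u); apply/pbP; exists u; split => //; exact: eqN_refl. Qed.
Definition len u := ex_minn (lenP_ex u).

Lemma len_rep u : exists v, size v = len u /\ eqN u v.
Proof. by rewrite /len; case: ex_minnP => n /pbP. Qed.
Lemma len_min u v : eqN u v -> len u <= size v.
Proof. rewrite /len; case: ex_minnP => n _ H e; apply: H; apply/pbP; by exists v. Qed.
Lemma len_size u : len u <= size u.
Proof. exact: len_min (eqN_refl u). Qed.
Lemma len_eq u v : eqN u v -> len u = len v.
Proof.
move=> e; apply/eqP; rewrite eqn_leq; apply/andP; split.
- have [v' [sv ev]] := len_rep v; rewrite -sv; apply: len_min; exact: eqN_trans ev.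
- have [u' [su eu]] := len_rep u; rewrite -su; apply: len_min; apply: eqN_trans eu.
  exact: eqN_sym.
Qed.
Lemma len_cat u v : len (u ++ v) <= len u + len v.
Proof.
have [u' [su eu]] := len_rep u; have [v' [sv ev]] := len_rep v.
rewrite -su -sv -size_cat; apply: len_min; exact: eqN_cat.
Qed.
Lemma len0 u : len u = 0 -> eqN u [::].
Proof. have [v [sv ev]] := len_rep u => h; move: sv; rewrite h => /size0nil H; by subst v. Qed.
Lemma len_snoc u x : len (rcons u x) = (len u).+1 \/ len u = (len (rcons u x)).+1.
Proof.
have h1 : len (rcons u x) <= (len u).+1.
  have := len_cat u [:: x]; have := len_size [:: x]; rewrite cats1 /=; lia.
have h2 : len u <= (len (rcons u x)).+1.
  rewrite (len_eq (eqN_sym (eqN_rcons2 u x))).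
  have := len_cat (rcons u x) [:: x]; have := len_size [:: x]; rewrite cats1 /=; lia.
have h3 : odd (len (rcons u x)) = ~~ odd (len u).
  have [v [sv ev]] := len_rep u; have [v' [sv' ev']] := len_rep (rcons u x).
  rewrite -sv -sv'.
  have : eqN v' (rcons v x).
    apply: eqN_trans (eqN_sym ev') _; rewrite -!cats1; exact: eqN_cat ev (eqN_refl _).
  by move/eqN_odd ->; rewrite size_rcons.
have : len (rcons u x) <> len u by move=> e; move: h3; rewrite e; case: (odd _).
lia.
Qed.

Variables (G : Type) (act : T -> G -> G) (beta : T -> G -> R) (BN : T -> T -> R)
  (nonneg : G -> Prop).
Definition dact (u : seq T) (g : G) := foldl (fun g r => act r g) g u.
Hypothesis Hinv : forall u v, eqN u v -> forall g, dact u g = dact v g.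
Hypothesis HR : forall r t g, beta t (act r g) = (beta t g - 2 * BN r t * beta r g)%Re.
Hypothesis BNsym : forall r t, BN r t = BN t r.
Hypothesis BNrefl : forall r, BN r r = 1%Re.
Hypothesis Hpos : forall r g, nonneg g -> (0 <= beta r g)%Re.
Hypothesis Hwit : forall r, exists g, nonneg g /\ (0 < beta r g)%Re.
Hypothesis Hcheb : forall r t j, r != t ->
  (if N r t is Some n then j <= n else true) -> (0 <= cheb (-2 * BN r t) j)%Re.

Lemma dact_cat u v g : dact (u ++ v) g = dact v (dact u g).
Proof. exact: foldl_cat. Qed.

Lemma alt_beta k : forall s s' (a b : R) g,
  (b * beta s (dact (altE s s' k) g) + a * beta s' (dact (altE s s' k) g))%Re =
  (W (-2 * BN s s') a b k.+1 * beta (if odd k then s' else s) g +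
   W (-2 * BN s s') a b k * beta (if odd k then s else s') g)%Re.
Proof.
elim: k => [|k IH] s s' a b g; first by rewrite /=.
rewrite /= /dact foldl_rcons -/(dact _ _) !HR BNrefl (BNsym s' s).
set h := dact _ g.
have := IH s' s b (-2 * BN s s' * b - a)%Re g.
rewrite (BNsym s' s) !W_shift -/h => E.
have -> : (b * (beta s h - 2 * BN s s' * beta s' h) + a * (beta s' h - 2 * 1 * beta s' h))%Re
  = ((-2 * BN s s' * b - a) * beta s' h + b * beta s h)%Re by ring.
rewrite E; case: (odd k) => /=; ring.
Qed.

Lemma tits n : forall w s, len w <= n -> len w < len (rcons w s) ->
  forall g, nonneg g -> (0 <= beta s (dact w g))%Re.
Proof.
elim: n => [|n IHn] w s Hn Hlt g Hg.
  have e : eqN w [::] by apply: len0; rewrite leqn0 in Hn; exact/eqP.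
  rewrite (Hinv e) /=; exact: Hpos.
case: (leqP (len w) n) => [Hle|Hgt]; first exact: IHn.
have lw : len w = n.+1 by lia.
have [u [su eu]] := len_rep w.
case/lastP: u su eu => [|u' s'] su eu; first by rewrite lw in su.
rewrite size_rcons lw in su; case: su => su.
have lu' : len u' = n.
  have := len_size u'; rewrite su => h1.
  have := len_cat u' [:: s']; rewrite cats1 -(len_eq eu) lw.
  have := len_size [:: s']; rewrite /=; lia.
have ss' : s' != s.
  apply/negP => /eqP E; subst s'.
  have e : eqN (rcons w s) u'.
    apply: eqN_trans (_ : eqN (rcons (rcons u' s) s) _); last exact: eqN_rcons2.
    rewrite -[rcons w s]cats1 -[rcons (rcons u' s) s]cats1; exact: eqN_cat eu (eqN_refl _).
  have := len_min e; lia.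
pose Q v y := [/\ eqN w (v ++ y), len w = len v + size y &
                   all (fun x => (x == s) || (x == s')) y].
pose P m := pb (exists v y, Q v y /\ len v = m).
have Pex : exists m, P m.
  exists n; apply/pbP; exists u', [:: s']; split => //; split.
  - by rewrite cats1.
  - by rewrite lw lu' addn1.
  - by rewrite /= eqxx orbT.
case: (ex_minnP Pex) => m0 /pbP [v [y [[Ev Lv Av] Hm0]]] Hmin.
have m0n : m0 <= n.
  apply: Hmin; apply/pbP; exists u', [:: s']; split => //; split.
  - by rewrite cats1.
  - by rewrite lw lu' addn1.
  - by rewrite /= eqxx orbT.
have up : forall x, (x == s) || (x == s') -> len v < len (rcons v x).
  move=> x Hx; case: (len_snoc v x) => E; first by rewrite E.
  have : m0 <= len (rcons v x).
    apply: Hmin; apply/pbP; exists (rcons v x), (x :: y); split => //; split.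
    - apply: eqN_trans Ev _; rewrite -cats1 -catA /=.
      apply: eqN_sym; exact: (eqN_cancel v y x).
    - by rewrite Lv E /= addnS addSn.
    - by rewrite /= Hx.
  lia.
have IHs := IHn v s ltac:(lia) (up s ltac:(by rewrite eqxx)).
have IHs' := IHn v s' ltac:(lia) (up s' ltac:(by rewrite eqxx orbT)).
have red : forall y', eqN y y' -> size y <= size y'.
  move=> y' e.
  have : len w <= len v + size y'.
    rewrite (len_eq (eqN_trans Ev (eqN_cat (eqN_refl v) e))).
    apply: leq_trans (len_cat _ _) _; rewrite leq_add2l; exact: len_size.
  lia.
have shorter : forall z, eqN (rcons w s) (v ++ z) -> size z < size y -> False.
  move=> z e hz.
  have := len_eq e; have := len_cat v z; have := len_size z; lia.
have Hnd : forall y1 y2 x, y <> y1 ++ x :: x :: y2.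
  move=> y1 y2 x E.
  have := red (y1 ++ y2); rewrite E !size_cat /=.
  have : eqN (y1 ++ [:: x, x & y2]) (y1 ++ y2) by exact: eqN_cancel.
  move=> e /(_ e); lia.
have Hlast : forall y1 x, y = rcons y1 x -> x = s'.
  move=> y1 x E.
  have : (x == s) || (x == s') by move/allP: Av; apply; rewrite E mem_rcons mem_head.
  case/orP => /eqP // xs; subst x; exfalso.
  apply: (shorter y1); last by rewrite E size_rcons.
  rewrite -cats1; apply: eqN_trans (eqN_cat Ev (eqN_refl [:: s])) _.
  rewrite E -!cats1 -!catA /= catA; exact: eqN_cancel_r.
have ss2 : s != s' by rewrite eq_sym.
have yalt := altE_char ss2 Av Hnd Hlast.
have Hbound : if N s s' is Some nn then size y < nn else true.
  case En: (N s s') => [nn|] //.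
  rewrite ltnNge; apply/negP => Hge.
  have nn0 : 0 < nn by case: nn En {Hge} => // /Nnz.
  case: nn nn0 En Hge => // nn' _ En Hge.
  have := altE_cat nn'.+1 s s' (size y - nn'.+1); rewrite subnK // -yalt => Ey.
  move: Ey; set Pref := altE _ _ (size y - nn'.+1) => Ey.
  apply: (shorter (Pref ++ altE s s' nn')); last first.
    by rewrite Ey !size_cat !size_altE; lia.
  rewrite -cats1; apply: eqN_trans (eqN_cat Ev (eqN_refl [:: s])) _.
  apply: eqN_trans (_ : eqN ((v ++ (Pref ++ altE s' s nn'.+1)) ++ [:: s]) _).
    rewrite {1}Ey; apply: eqN_cat; last exact: eqN_refl.
    apply: eqN_cat (eqN_refl _) _; apply: eqN_cat (eqN_refl _) _; exact: eqN_alt.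
  rewrite /= -cats1 -!catA /= !catA; exact: eqN_cancel_r.
rewrite (Hinv Ev) dact_cat.
set h := dact v g.
have := alt_beta (size y) s s' 0%Re 1%Re h; rewrite -yalt.
rewrite Rmult_0_l Rplus_0_r Rmult_1_l => ->.
have c1 : (0 <= cheb (-2 * BN s s') (size y).+1)%Re.
  apply: Hcheb => //; case: (N s s') Hbound => //.
have c0 : (0 <= cheb (-2 * BN s s') (size y))%Re.
  apply: Hcheb => //; case: (N s s') Hbound => // nn; exact: ltnW.
rewrite /cheb in c0 c1.
have b1 := IHs g Hg; have b2 := IHs' g Hg; rewrite -/h in b1 b2.
apply: Rplus_le_le_0_compat; apply: Rmult_le_pos => //; by case: (odd (size y)).
Qed.

Lemma tits_inj u : (forall g, dact u g = g) -> eqN u [::].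
Proof.
move=> Hu.
case El: (len u) => [|k]; first exact: len0.
exfalso.
have [v [sv ev]] := len_rep u.
case/lastP: v sv ev => [|v' r] sv ev; first by rewrite El in sv.
rewrite size_rcons El in sv; case: sv => sv.
have lv : len (rcons v' r) = k.+1 by rewrite -(len_eq ev).
have lv' : len v' = k.
  have := len_size v'; have := len_cat v' [:: r]; have := len_size [:: r].
  rewrite cats1 lv /=; lia.
have T1 := @tits k v' r (ltac:(by rewrite lv')) (ltac:(by rewrite lv lv')).
have [g [Hg Hb]] := Hwit r.
have invol : forall x h, act x (act x h) = h.
  move=> x h; exact: (Hinv (eqN_xx x) h).
have E1 : act r (dact v' g) = g.
  have := Hu g; rewrite (Hinv ev) /dact foldl_rcons; exact: id.
have E2 : dact v' g = act r g by rewrite -{2}E1 invol.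
have := T1 g Hg; rewrite E2 HR BNrefl; lra.
Qed.
End Tits.


Lemma INR_addn (a b : nat) : INR (a + b) = (INR a + INR b)%Re.
Proof. exact: plus_INR. Qed.

Section Trig.
Local Open Scope R_scope.

Lemma cheb_sin th j : sin th <> 0 -> cheb (2 * cos th) j = sin (INR j * th) / sin th.
Proof.
move=> hs.
suff : cheb (2 * cos th) j = sin (INR j * th) / sin th /\
       cheb (2 * cos th) j.+1 = sin (INR j.+1 * th) / sin th by case.
elim: j => [|j [IH1 IH2]].
  rewrite /cheb /= Rmult_0_l sin_0 Rmult_1_l; split; [by rewrite /Rdiv Rmult_0_l | by rewrite /Rdiv Rinv_r].
split => //.
rewrite /cheb WSS -/(cheb _) IH1 IH2.
have -> : INR j.+2 * th = INR j.+1 * th + th by rewrite !S_INR; ring.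
have -> : INR j * th = INR j.+1 * th - th by rewrite !S_INR; ring.
rewrite sin_plus sin_minus; field => //.
Qed.

Lemma W_lin g a b j : W g a b j.+1 = b * cheb g j.+1 - a * cheb g j.
Proof.
suff : W g a b j.+1 = b * cheb g j.+1 - a * cheb g j /\
       W g a b j.+2 = b * cheb g j.+2 - a * cheb g j.+1 by case.
elim: j => [|j [IH1 IH2]].
  rewrite /cheb /=; split; ring.
split => //.
rewrite WSS IH1 IH2 /cheb [W g 0 1 j.+3]WSS [W g 0 1 j.+2]WSS; ring.
Qed.

Section Period.
Variable k : nat.
Hypothesis hk : (2 <= k)%N.
Let th := PI / INR k.
Lemma kpos : 0 < INR k.
Proof. apply: lt_0_INR; apply/ltP; lia. Qed.
Lemma th_bounds : 0 < th <= PI / 2.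
Proof.
have k2 : 2 <= INR k by have := le_INR 2 k (ltac:(apply/leP; lia)); simpl.
have := PI_RGT_0 => hp; rewrite /th; split.
- apply: Rdiv_lt_0_compat => //; exact: kpos.
- apply: Rmult_le_compat_l; first lra. apply: Rinv_le_contravar; lra.
Qed.
Lemma sin_th : 0 < sin th.
Proof. have [h1 h2] := th_bounds; apply: sin_gt_0 => //; have := PI_RGT_0; lra. Qed.
Lemma kth : INR k * th = PI.
Proof. rewrite /th; field; have := kpos; lra. Qed.

Lemma cheb_anti i : cheb (2 * cos th) (i + k) = - cheb (2 * cos th) i.
Proof.
have hs : sin th <> 0 by have := sin_th; lra.
rewrite !cheb_sin // INR_addn Rmult_plus_distr_r kth neg_sin; field => //.
Qed.

Lemma cheb_km1 : cheb (2 * cos th) k.-1 = 1.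
Proof.
have hs : sin th <> 0 by have := sin_th; lra.
rewrite cheb_sin //.
have -> : INR k.-1 * th = PI - th.
  have e : INR k = INR k.-1 + 1 by rewrite -S_INR; congr INR; lia.
  have := kth; rewrite e Rmult_plus_distr_r Rmult_1_l => h; lra.
rewrite sin_PI_x; field => //.
Qed.

Lemma W_period a b j : W (2 * cos th) a b (j + k) = - W (2 * cos th) a b j.
Proof.
case: j => [|j].
  rewrite add0n.
  have -> : k = k.-1.+1 by lia.
  rewrite W_lin -{1}[k.-1.+1]add0n -(_ : k = k.-1.+1) ?cheb_anti ?cheb_km1 /=; try lia.
  rewrite /cheb /=; ring.
rewrite addSn W_lin -addSn !cheb_anti W_lin; ring.
Qed.

Lemma W_period2 a b j : W (2 * cos th) a b (j + k.*2) = W (2 * cos th) a b j.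
Proof. by rewrite -addnn addnA !W_period Ropp_involutive. Qed.
End Period.
End Trig.

Section WM.
Variable S : eqType.
Variable M : S -> S -> option nat.
Hypothesis HM : coxeter_matrix M.
Local Open Scope R_scope.

Definition B (s t : S) : R := match M s t with Some k => - cos (PI / INR k) | None => -1 end.
Definition actM (s : S) (f : S -> R) : S -> R := fun t => f t - 2 * B s t * f s.
Definition dactM (w : seq (letter S)) (f : S -> R) := foldl (fun f x => actM x.1 f) f w.

Lemma B_sym s t : B s t = B t s.
Proof. by rewrite /B (HM.1 s t). Qed.
Lemma B_refl s : B s s = 1.
Proof.
rewrite /B (proj2 (HM.2.2 s s) erefl) /= Rdiv_1_r cos_PI; ring.
Qed.

Lemma actM_invol s f : actM s (actM s f) = f.
Proof. apply: functional_extensionality => t; rewrite /actM B_refl; ring. Qed.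

Lemma braid s s' k : M s s' = Some k -> forall g, iter k (fun h => actM s' (actM s h)) g = g.
Proof.
move=> hk g.
case: k hk => [|[|k]] hk.
- by have := HM.2.1 s s'; rewrite hk.
- have e : s = s' by apply/(HM.2.2 s s').
  by subst s'; rewrite /= actM_invol.
set K := k.+2.
have hK : (2 <= K)%N by [].
set c := B s s'.
have hc : c = - cos (PI / INR K) by rewrite /c /B hk.
have ss : B s s = 1 := B_refl s.
have s's' : B s' s' = 1 := B_refl s'.
have s's : B s' s = c by rewrite B_sym.
have c2 : 1 - c * c > 0.
  have := sin_th hK; have := sin2_cos2 (PI / INR K); rewrite /Rsqr hc => h1 h2.
  nra.
pose F x y := fun t => g t + x * B s t + y * B s' t.
have Fs : forall x y, actM s (F x y) = F (x - 2 * (g s + x + c * y)) y.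
  move=> x y; apply: functional_extensionality => t; rewrite /actM /F ss s's; ring.
have Fs' : forall x y, actM s' (F x y) = F x (y - 2 * (g s' + c * x + y)).
  move=> x y; apply: functional_extensionality => t; rewrite /actM /F s's' -/c; ring.
pose x1f (p : R * R) := p.1 - 2 * (g s + p.1 + c * p.2).
pose stepP (p : R * R) := (x1f p, p.2 - 2 * (g s' + c * x1f p + p.2)).
have sp1 : forall p, (stepP p).1 = x1f p by [].
have sp2 : forall p, (stepP p).2 = p.2 - 2 * (g s' + c * x1f p + p.2) by [].
have It : forall j p, iter j (fun h => actM s' (actM s h)) (F p.1 p.2) =
                      F (iter j stepP p).1 (iter j stepP p).2.
  elim=> [|j IH] p //=.
  by rewrite IH Fs Fs'.
set xs := (c * g s' - g s) / (1 - c * c).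
set ys := (c * g s - g s') / (1 - c * c).
have e1 : g s + xs + c * ys = 0 by rewrite /xs /ys; field; lra.
have e2 : g s' + c * xs + ys = 0 by rewrite /xs /ys; field; lra.
set gam := 2 * cos (PI / INR K).
have hg : gam = -2 * c by rewrite /gam hc; ring.
have Ij : forall j, (iter j stepP (0, 0)).1 = xs + W gam (-xs) (-ys) j.*2 /\
                    (iter j stepP (0, 0)).2 = ys + W gam (-xs) (-ys) j.*2.+1.
  elim=> [|j [IH1 IH2]]; first by rewrite /=; split; ring.
  rewrite iterS sp1 sp2 /x1f IH1 IH2 doubleS !WSS hg.
  split.
  - have -> : g s = - xs - c * ys by lra.
    ring.
  - have -> : g s = - xs - c * ys by lra.
    have -> : g s' = - c * xs - ys by lra.
    ring.
have := It K (0, 0).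
have -> : F (0, 0).1 (0, 0).2 = g by apply: functional_extensionality => t; rewrite /F /=; ring.
move=> ->.
have [h1 h2] := Ij K.
rewrite h1 h2 /gam -[K.*2]add0n -addSn !(W_period2 hK) /=.
have -> : xs + - xs = 0 by ring.
have -> : ys + - ys = 0 by ring.
by apply: functional_extensionality => t; rewrite /F; ring.
Qed.

Lemma dactM_cat w w' f : dactM (w ++ w') f = dactM w' (dactM w f).
Proof. exact: foldl_cat. Qed.

Lemma dactM_rel s s' k f :
  dactM (flatten (nseq k [:: (s, true); (s', true)])) f = iter k (fun h => actM s' (actM s h)) f.
Proof. elim: k f => // k IH f; by rewrite iterSr -IH. Qed.

Lemma dactM_inv w w' : cox_eq M w w' -> forall f, dactM w f = dactM w' f.
Proof.
elim=> {w w'}.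
- by [].
- by move=> w w' _ IH f; rewrite IH.
- by move=> w1 w2 w3 _ IH1 _ IH2 f; rewrite IH1 IH2.
- move=> u v x f; rewrite !dactM_cat /= actM_invol //.
- move=> u v r [s [s' [k [hk ->]]]] f.
  by rewrite !dactM_cat dactM_rel (braid hk).
Qed.
End WM.


Lemma INR3 : INR 3 = 3%Re. Proof. simpl; lra. Qed.
Lemma INR2 : INR 2 = 2%Re. Proof. simpl; lra. Qed.

Lemma cos_ge_half k : (3 <= k)%N -> (1/2 <= cos (PI / INR k))%Re.
Proof.
move=> hk.
have k3 : (3 <= INR k)%Re by rewrite -INR3; apply: le_INR; apply/leP.
have hp := PI_RGT_0.
have kp : (0 < INR k)%Re by lra.
rewrite -cos_PI3.
have h1 : (PI / INR k <= PI / 3)%Re.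
  apply: Rmult_le_compat_l; first lra. apply: Rinv_le_contravar; lra.
have h0 : (0 <= PI / INR k)%Re by apply: Rlt_le; apply: Rdiv_lt_0_compat.
case: (Rle_lt_or_eq_dec _ _ h1) => h; last by rewrite h; lra.
apply: Rlt_le; apply: cos_decreasing_1 => //; lra.
Qed.

Lemma cos_ge0_k k : (2 <= k)%N -> (0 <= cos (PI / INR k))%Re.
Proof.
move=> hk.
have k2 : (2 <= INR k)%Re by rewrite -INR2; apply: le_INR; apply/leP.
have hp := PI_RGT_0.
have h1 : (PI / INR k <= PI / 2)%Re.
  apply: Rmult_le_compat_l; first lra. apply: Rinv_le_contravar; lra.
have h0 : (0 <= PI / INR k)%Re by apply: Rlt_le; apply: Rdiv_lt_0_compat; lra.
apply: cos_ge_0; lra.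
Qed.

Definition Bof (o : option nat) : R :=
  match o with Some k => (- cos (PI / INR k))%Re | None => (-1)%Re end.

Lemma ce_cases x y : x <> Some 0 -> x <> Some 1 -> y <> Some 0 -> y <> Some 1 ->
  match contr_entry x y with
  | Some n => (2 <= n)%N /\ (Bof x + Bof y)%Re = (- cos (PI / INR n))%Re
  | None => (Bof x + Bof y <= -1)%Re
  end.
Proof.
have c2 : cos (PI / INR 2) = 0%Re by rewrite INR2 cos_PI2.
case: x => [x|]; case: y => [y|] hx0 hx1 hy0 hy1 /=; rewrite /contr_entry.
- case: ifP => [/orP [] /eqP [] E|].
  + subst x; rewrite /= c2 (_ : 2 + y - 2 = y)%N; last by lia.
    split; [ by case: y hy0 hy1 => [|[|y]] | lra].
  + subst y; rewrite /= c2 (_ : x + 2 - 2 = x)%N; last by lia.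
    split; [ by case: x hx0 hx1 => [|[|x]] | lra].
  + move=> /negbT; rewrite negb_or => /andP [h1 h2].
    have x3 : (3 <= x)%N.
      case: x hx0 hx1 h1 => [|[|[|x]]] //.
    have y3 : (3 <= y)%N.
      case: y hy0 hy1 h2 => [|[|[|y]]] //.
    have := cos_ge_half x3; have := cos_ge_half y3; lra.
- rewrite if_same /=.
  have x2 : (2 <= x)%N by case: x hx0 hx1 => [|[|x]].
  have := cos_ge0_k x2; lra.
- rewrite if_same /=.
  have y2 : (2 <= y)%N by case: y hy0 hy1 => [|[|y]].
  have := cos_ge0_k y2; lra.
- by rewrite /=; lra.
Qed.

Lemma cheb_pos_fin n j : (2 <= n)%N -> (j <= n)%N -> (0 <= cheb (2 * cos (PI / INR n)) j)%Re.
Proof.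
move=> hn hj.
have hs := sin_th hn.
rewrite cheb_sin; last lra.
apply: Rmult_le_pos; last by apply: Rlt_le; apply: Rinv_0_lt_compat.
apply: sin_ge_0.
- apply: Rmult_le_pos; first exact: pos_INR.
  apply: Rlt_le; apply: Rdiv_lt_0_compat; first exact: PI_RGT_0; exact: kpos.
- have := kth hn => e.
  have : (INR j <= INR n)%Re by apply: le_INR; apply/leP.
  have := th_bounds hn => [[h1 _]] hjn.
  apply: Rle_trans (_ : INR n * (PI / INR n) <= PI)%Re; last by rewrite e; lra.
  apply: Rmult_le_compat_r => //; lra.
Qed.

Lemma cheb_pos_inf g j : (2 <= g)%Re -> (0 <= cheb g j)%Re.
Proof.
move=> hg.
suff : (0 <= cheb g j <= cheb g j.+1)%Re by case.
elim: j => [|j [IH1 IH2]]; first by rewrite /cheb /=; lra.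
split; first lra.
rewrite /cheb WSS -/(cheb _ _).
have : (0 <= (g - 2) * cheb g j.+1)%Re by apply: Rmult_le_pos; lra.
rewrite Rmult_minus_distr_r -[W g 0 1 j]/(cheb g j); lra.
Qed.


Lemma ce_some x y n : contr_entry x y = Some n ->
  (x = Some 2 /\ y = Some n) \/ (y = Some 2 /\ x = Some n).
Proof.
rewrite /contr_entry; case: ifP => // /orP [] /eqP E; subst.
- case: y => // y [<-]; left; split => //; congr Some; lia.
- case: x => // x [<-]; right; split => //; congr Some; lia.
Qed.

Lemma map_flatten_nseq (A B : Type) (f : A -> B) n l :
  map f (flatten (nseq n l)) = flatten (nseq n (map f l)).
Proof. by elim: n => //= n <-; rewrite map_cat. Qed.

Section Contr.
Variables (S : eqType) (M : S -> S -> option nat) (sp sm : S).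
Hypotheses (HM : coxeter_matrix M) (hpm : sp != sm) (h3 : M sp sm = Some 3).
Local Notation T := (contr_type sp sm).
Local Notation N := (contr_matrix M sp sm).

Lemma Mrefl x : M x x = Some 1. Proof. exact: (proj2 (HM.2.2 x x) erefl). Qed.
Lemma Msym x y : M x y = M y x. Proof. exact: HM.1. Qed.

Local Notation eqM := (eqN M).
Lemma eqM_refl u : eqM u u. Proof. exact: eqN_refl. Qed.

Lemma eqM_rel a b n : M a b = Some n -> eqM (flatten (nseq n [:: a; b])) [::].
Proof.
move=> h; rewrite /eqN /liftw map_flatten_nseq /=.
by have := @ceq_rel _ M [::] [::] a b n h; rewrite /= cats0.
Qed.

Lemma eqM_pow X Y n : eqM X Y -> eqM (flatten (nseq n X)) (flatten (nseq n Y)).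
Proof. move=> e; elim: n => [|n IH] /=; [exact: eqM_refl | exact: eqN_cat]. Qed.

Lemma eqM_conj c z n : eqM (flatten (nseq n (c :: z ++ [:: c]))) (c :: flatten (nseq n z) ++ [:: c]).
Proof.
elim: n => [|n IH] /=; first exact: eqN_sym (eqN_xx Mrefl c).
have := eqN_cat (eqM_refl (c :: z ++ [:: c])) IH.
move/eqN_trans; apply.
have -> : (c :: z ++ [:: c]) ++ c :: flatten (nseq n z) ++ [:: c] =
          (c :: z) ++ [:: c; c] ++ (flatten (nseq n z) ++ [:: c]) by rewrite /= -!catA.
apply: eqN_trans (eqN_cancel Mrefl _ _ _) _.
by rewrite /= catA; exact: eqM_refl.
Qed.

Lemma eqM_comm a b : M a b = Some 2 -> eqM [:: a; b] [:: b; a].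
Proof.
move=> h; apply: eqN_sym.
have r := eqM_rel h; rewrite /= in r.
apply: eqN_trans (_ : eqM ([:: b; a] ++ [:: a; b; a; b]) _).
  by have := eqN_cat (eqM_refl [:: b; a]) (eqN_sym r); rewrite cats0; apply.
apply: eqN_trans (_ : eqM ([:: b] ++ [:: b; a] ++ [:: b]) _).
  exact: (eqN_cancel Mrefl [:: b] [:: b; a; b] a).
exact: (eqN_cancel Mrefl [::] [:: a; b] b).
Qed.

Lemma braid3 : eqM [:: sp; sm; sp] [:: sm; sp; sm].
Proof. apply: eqN_sym; exact: (eqN_alt Mrefl h3). Qed.

Lemma conj_finish c z n X : eqM (flatten (nseq n z)) [::] -> eqM X (c :: z ++ [:: c]) ->
  eqM (flatten (nseq n X)) [::].
Proof.
move=> hz hX.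
apply: eqN_trans (eqM_pow n hX) _.
apply: eqN_trans (eqM_conj c z n) _.
apply: eqN_trans (_ : eqM ([:: c] ++ [::] ++ [:: c]) _); last exact: eqN_xx Mrefl c.
apply: (eqN_cat (eqM_refl [:: c])); exact: eqN_cat hz (eqM_refl _).
Qed.

Definition phil (r : T) : seq S := match r with Some a => [:: val a] | None => [:: sp; sm; sp] end.
Definition phiw (u : seq T) : seq S := flatten (map phil u).

Lemma phiw_cat u v : phiw (u ++ v) = phiw u ++ phiw v.
Proof. by rewrite /phiw map_cat flatten_cat. Qed.
Lemma phiw_nseq n l : phiw (flatten (nseq n l)) = flatten (nseq n (phiw l)).
Proof. by elim: n => //= n <-; rewrite phiw_cat. Qed.
Lemma phi_lift u : contr_phi sp sm (liftw u) = liftw (phiw u).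
Proof.
elim: u => //= x u IH.
rewrite /contr_phi /= -/(contr_phi _ _ _) IH /liftw /phiw /= map_cat.
by case: x.
Qed.
Lemma contr_phi_cat w w' : contr_phi sp sm (w ++ w') = contr_phi sp sm w ++ contr_phi sp sm w'.
Proof. by rewrite /contr_phi map_cat flatten_cat. Qed.

Lemma vals (a : contr_set sp sm) : val a != sp /\ val a != sm.
Proof. by case: a => x /= /andP. Qed.

Lemma rel_ok x y n : N x y = Some n -> eqM (flatten (nseq n (phiw [:: x; y]))) [::].
Proof.
case: x => [a|]; case: y => [b|] /= hn; rewrite /phiw /=.
- by apply: eqM_rel.
- case: (ce_some hn) => [[h2 hn']|[h2 hn']].
  + apply: (conj_finish (c:=sp) (z:=[:: val a; sm])); first exact: eqM_rel.
    have := eqN_cat (eqM_comm h2) (eqM_refl [:: sm; sp]); by apply.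
  + apply: (conj_finish (c:=sm) (z:=[:: val a; sp])); first exact: eqM_rel.
    apply: eqN_trans (eqN_cat (eqM_refl [:: val a]) braid3) _.
    have := eqN_cat (eqM_comm h2) (eqM_refl [:: sp; sm]); by apply.
- case: (ce_some hn) => [[h2 hn']|[h2 hn']].
  + apply: (conj_finish (c:=sp) (z:=[:: sm; val b])); first by apply: eqM_rel; rewrite Msym.
    have := eqN_cat (eqM_refl [:: sp; sm]) (eqM_comm (ltac:(by rewrite Msym) : M sp (val b) = Some 2)).
    by apply.
  + apply: (conj_finish (c:=sm) (z:=[:: sp; val b])); first by apply: eqM_rel; rewrite Msym.
    apply: eqN_trans (eqN_cat braid3 (eqM_refl [:: val b])) _.
    have := eqN_cat (eqM_refl [:: sm; sp]) (eqM_comm (ltac:(by rewrite Msym) : M sm (val b) = Some 2)).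
    by apply.
- case: hn => <-; rewrite /=.
  apply: eqN_trans (eqN_cancel Mrefl [:: sp; sm] [:: sm; sp] sp) _.
  apply: eqN_trans (eqN_cancel Mrefl [:: sp] [:: sp] sm) _.
  exact: eqN_xx Mrefl sp.
Qed.

Definition invw (X : seq (letter S)) := rev (map (@inv_letter S) X).

Lemma cancel_mid X : forall A C, cox_eq M (A ++ X ++ invw X ++ C) (A ++ C).
Proof.
elim: X => [|x X IH] A C; first exact: pe_refl.
rewrite /invw /= rev_cons -/(invw X).
have -> : A ++ (x :: X) ++ rcons (invw X) (inv_letter x) ++ C =
          (A ++ [:: x]) ++ X ++ invw X ++ (inv_letter x :: C).
  by rewrite -cats1 -!catA.
apply: pe_trans (IH _ _) _.
rewrite -catA /=; exact: pe_free.
Qed.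

Lemma forward w w' : cox_eq N w w' -> cox_eq M (contr_phi sp sm w) (contr_phi sp sm w').
Proof.
elim=> {w w'}.
- move=> w; exact: pe_refl.
- move=> w w' _ IH; exact: pe_sym.
- move=> w1 w2 w3 _ IH1 _ IH2; exact: pe_trans IH2.
- move=> u v [r b]; rewrite !contr_phi_cat.
  case: r => [a|] /=.
  + exact: pe_free.
  + have := cancel_mid [:: (sp, b); (sm, b); (sp, b)] (contr_phi sp sm u) (contr_phi sp sm v).
    by rewrite /invw /=.
- move=> u v r [x [y [n [hn ->]]]]; rewrite !contr_phi_cat.
  have H : cox_eq M (contr_phi sp sm (flatten (nseq n [:: (x, true); (y, true)]))) [::].
    have -> : flatten (nseq n [:: (x, true); (y, true)]) = liftw (flatten (nseq n [:: x; y])).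
      by rewrite /liftw map_flatten_nseq.
    rewrite phi_lift phiw_nseq; exact: rel_ok hn.
  exact: pe_ctx _ _ H.
Qed.

Local Open Scope R_scope.
Definition betaC (r : T) (g : S -> R) : R :=
  match r with Some a => g (val a) | None => g sp + g sm end.
Definition BNC (r t : T) : R :=
  match r, t with
  | Some a, Some b => B M (val a) (val b)
  | Some a, None => B M (val a) sp + B M (val a) sm
  | None, Some b => B M (val b) sp + B M (val b) sm
  | None, None => 1
  end.
Definition actC (r : T) (g : S -> R) : S -> R := dactM M (liftw (phil r)) g.

Lemma dactC u g : dact actC u g = dactM M (liftw (phiw u)) g.
Proof.
elim: u g => [|r u IH] g //=.
by rewrite IH /phiw /= /liftw map_cat dactM_cat.
Qed.

Lemma HinvC u v : eqN N u v -> forall g, dact actC u g = dact actC v g.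
Proof.
move=> e g; rewrite !dactC.
have := forward e; rewrite !phi_lift => e'; by rewrite (dactM_inv HM e').
Qed.

Lemma Bpm : B M sp sm = -1/2.
Proof. by rewrite /B h3 INR3 cos_PI3; field. Qed.
Lemma Bmp : B M sm sp = -1/2.
Proof. by rewrite (B_sym HM) Bpm. Qed.

Lemma HRC r t g : betaC t (actC r g) = betaC t g - 2 * BNC r t * betaC r g.
Proof.
have Bpp := B_refl HM sp; have Bmm := B_refl HM sm.
case: r => [a|]; case: t => [b|] /=; rewrite /actC /= /actM.
- ring.
- ring.
- rewrite Bpp Bpm Bmp (B_sym HM sp (sval b)) (B_sym HM sm (sval b)); field.
- rewrite Bpp Bmm Bpm Bmp; field.
Qed.

Lemma BNC_sym r t : BNC r t = BNC t r.
Proof. by case: r => [a|]; case: t => [b|] //=; rewrite (B_sym HM). Qed.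
Lemma BNC_refl r : BNC r r = 1.
Proof. by case: r => [a|] //=; rewrite B_refl. Qed.

Definition nonnegC (g : S -> R) := forall t, 0 <= g t.
Lemma HposC r g : nonnegC g -> 0 <= betaC r g.
Proof. move=> h; case: r => [a|] /=; [exact: h | have := h sp; have := h sm; lra]. Qed.
Lemma HwitC r : exists g, nonnegC g /\ 0 < betaC r g.
Proof.
case: r => [a|].
- exists (fun t => if t == val a then 1 else 0); split.
  + move=> t; case: (_ == _); lra.
  + by rewrite /= eqxx; lra.
- exists (fun t => if t == sp then 1 else 0); split.
  + move=> t; case: (_ == _); lra.
  + rewrite /= eqxx (negbTE (ltac:(by rewrite eq_sym) : sm != sp)); lra.
Qed.

Lemma Mne x y : x != y -> M x y <> Some 0%N /\ M x y <> Some 1%N.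
Proof.
move=> xy; split; first exact: HM.2.1.
by move/(HM.2.2 x y) => E; rewrite E eqxx in xy.
Qed.

Lemma BN_info r t : r != t ->
  match N r t with
  | Some n => (2 <= n)%N /\ BNC r t = - cos (PI / INR n)
  | None => BNC r t <= -1
  end.
Proof.
case: r => [a|]; case: t => [b|] //= rt.
- have ab : val a != val b.
    by apply: contraNneq rt => E; apply/eqP; congr Some; apply: val_inj.
  have [h0 h1] := Mne ab.
  rewrite /B; case E: (M (val a) (val b)) => [k|]; last lra.
  split => //; case: k E h0 h1 => [|[|k]] E h0 h1 //; by rewrite E in h0 h1.
- have [a1 a2] := vals a.
  have [x0 x1] := Mne a1; have [y0 y1] := Mne a2.
  have := ce_cases x0 x1 y0 y1; by rewrite /B.
- have [a1 a2] := vals b.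
  have [x0 x1] := Mne a1; have [y0 y1] := Mne a2.
  have := ce_cases x0 x1 y0 y1; by rewrite /B.
Qed.

Lemma HchebC r t j : r != t ->
  (if N r t is Some n then (j <= n)%N else true) -> 0 <= cheb (-2 * BNC r t) j.
Proof.
move=> rt; have := BN_info rt.
case: (N r t) => [n [n2 ->] hj|hB _].
- rewrite (_ : -2 * - cos (PI / INR n) = 2 * cos (PI / INR n)); last ring.
  exact: cheb_pos_fin.
- apply: cheb_pos_inf; lra.
Qed.

Lemma NreflC x : N x x = Some 1%N.
Proof. by case: x => [a|] //=; rewrite Mrefl. Qed.
Lemma NnzC x y : N x y <> Some 0%N.
Proof.
case: x => [a|]; case: y => [b|] //=.
- exact: HM.2.1.
- move/ce_some => [[_ E]|[_ E]]; exact: HM.2.1 E.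
- move/ce_some => [[_ E]|[_ E]]; exact: HM.2.1 E.
Qed.

Lemma backward w w' : cox_eq M (contr_phi sp sm w) (contr_phi sp sm w') -> cox_eq N w w'.
Proof.
move=> H.
set a := map fst w; set b := map fst w'.
have wa : cox_eq N w (liftw a) by rewrite /liftw /a -map_comp; exact: ceq_pos NreflC w.
have wb : cox_eq N w' (liftw b) by rewrite /liftw /b -map_comp; exact: ceq_pos NreflC w'.
have dab : forall g, dact actC a g = dact actC b g.
  move=> g; rewrite !dactC -!phi_lift.
  rewrite -(dactM_inv HM (forward wa)) -(dactM_inv HM (forward wb)).
  by rewrite (dactM_inv HM H).
have hx : forall g, dact actC (a ++ rev b) g = g.
  move=> g; rewrite dact_cat dab -dact_cat.
  have e : eqN N (b ++ rev b) [::].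
    by have := eqN_rev NreflC (rev b); rewrite revK.
  by rewrite (HinvC e).
have ex := tits_inj NreflC NnzC HinvC HRC BNC_sym BNC_refl HposC HwitC HchebC hx.
have eab : eqN N a b.
  apply: eqN_trans (_ : eqN N a ((a ++ rev b) ++ b)) _.
    rewrite -catA; apply: eqN_sym.
    have := eqN_cat (eqN_refl N a) (eqN_rev NreflC b); rewrite cats0; by apply.
  exact: eqN_cat ex (eqN_refl N b).
apply: pe_trans wa _; apply: pe_trans _ (pe_sym wb); exact: eab.
Qed.
End Contr.


Theorem mainTheorem1 (S : eqType) (M : S -> S -> option nat) (sp sm : S) :
  coxeter_matrix M -> sp != sm -> M sp sm = Some 3 ->
  forall w w' : seq (letter (contr_type sp sm)),
    cox_eq (contr_matrix M sp sm) w w' <-> cox_eq M (contr_phi sp sm w) (contr_phi sp sm w').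
Proof.
move=> HM hpm h3 w w'; split => H.
- exact: (forward HM h3 H).
- exact: (backward HM hpm h3 H).
Qed.
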